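(* Let $\lambda\supseteq\mu$ be partitions and $j\in\mathbb Z$, and suppose $\mu$ has an addable node in column $j$. If there exists a cover-expansive Dyck tiling of $\lambda\setminus\mu$, then $\lambda$ has either an addable node or a removable node in column $j$.
   Context: Partitions are identified with Young diagrams $\{(a,b)\in\mathbb N^2:b\le\lambda_a\}$; nodes are elements of $\mathbb N^2$; $(a,b)$ has height $a+b$ and lies in column $b-a$ (smaller column = further left). An addable node of $\lambda$ is a node not in $\lambda$ whose addition gives a partition; a removable node is a node of $\lambda$ whose removal gives a partition. $\mathtt{NE}(\mathfrak n)=\mathfrak n+(0,1)$, $\mathtt{SW}(\mathfrak n)=\mathfrak n-(0,1)$, $\mathtt{SE}(\mathfrak n)=\mathfrak n-(1,0)$. A tile is a finite nonempty set of nodes orderable $\mathfrak n_1,\dots,\mathfrak n_r$ with $\mathfrak n_{i+1}\in\{\mathtt{NE}(\mathfrak n_i),\mathtt{SE}(\mathfrak n_i)\}$; start = leftmost node, end = rightmost node; Dyck tile if start and end both attain the maximal height of its nodes. A Dyck tiling of $\lambda\setminus\mu$ is a partition of it into Dyck tiles. It is cover-expansive if whenever $\mathfrak a,\mathtt{SE}(\mathfrak a)\in\lambda\setminus\mu$, the tile of $\mathtt{SE}(\mathfrak a)$ starts weakly left of the start of the tile of $\mathfrak a$, and whenever $\mathfrak a,\mathtt{SW}(\mathfrak a)\in\lambda\setminus\mu$, the tile of $\mathtt{SW}(\mathfrak a)$ ends weakly right of the end of the tile of $\mathfrak a$. *)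

(* Defs.v *)
From mathcomp Require Import all_boot all_algebra.
Set Implicit Arguments. Unset Strict Implicit. Unset Printing Implicit Defensive.
Import GRing.Theory Num.Theory.

(* Nodes are pairs (a,b) of positive naturals (row a, column-index b). *)
Definition node := (nat * nat)%type.
Definition is_node (n : node) : bool := (0 < n.1) && (0 < n.2).

Definition is_partition (l : seq nat) : bool :=
  sorted geq l && all (fun x => 0 < x) l.

Definition in_diag (l : seq nat) (n : node) : bool :=
  is_node n && (n.2 <= nth 0 l n.1.-1).

Definition in_skew (l m : seq nat) (n : node) : bool :=
  in_diag l n && ~~ in_diag m n.

Definition height (n : node) : nat := n.1 + n.2.
Definition ncol (n : node) : int := (n.2%:Z - n.1%:Z)%R.

Definition NE (n : node) : node := (n.1, n.2.+1).
Definition SW (n : node) : node := (n.1, n.2.-1).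
Definition SE (n : node) : node := (n.1.-1, n.2).

Definition addable (l : seq nat) (n : node) : Prop :=
  ~~ in_diag l n /\
  exists nu, is_partition nu /\ forall x, in_diag nu x = in_diag l x || (x == n).
Definition removable (l : seq nat) (n : node) : Prop :=
  in_diag l n /\
  exists nu, is_partition nu /\ forall x, in_diag nu x = in_diag l x && (x != n).

Definition tile_step (x y : node) : bool := (y == NE x) || (y == SE x).
Definition is_tile (t : seq node) : bool :=
  if t is x :: s then all is_node t && path tile_step x s else false.

(* Each step moves one column right, so the first node is the leftmost (start)
   and the last node is the rightmost (end). *)
Definition tstart (t : seq node) : node := head (0, 0) t.
Definition tend (t : seq node) : node := last (0, 0) t.

Definition is_dyck_tile (t : seq node) : bool :=
  is_tile t &&
  let h := \max_(n <- t) height n in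
  (height (tstart t) == h) && (height (tend t) == h).

Definition is_dyck_tiling (l m : seq nat) (T : seq (seq node)) : Prop :=
  all is_dyck_tile T /\ uniq (flatten T) /\
  forall n, (n \in flatten T) = in_skew l m n.

Definition cover_expansive (l m : seq nat) (T : seq (seq node)) : Prop :=
  (forall a t t', t \in T -> t' \in T ->
     in_skew l m a -> in_skew l m (SE a) -> a \in t -> SE a \in t' ->
     (ncol (tstart t') <= ncol (tstart t))%R) /\
  (forall a t t', t \in T -> t' \in T ->
     in_skew l m a -> in_skew l m (SW a) -> a \in t -> SW a \in t' ->
     (ncol (tend t) <= ncol (tend t'))%R).

(* Main.v *)
Require Import Defs.
From mathcomp Require Import all_boot all_algebra zify.
Set Implicit Arguments. Unset Strict Implicit.
Import GRing.Theory Num.Theory.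

Lemma part_mono l i k : is_partition l -> i <= k -> nth 0 l k <= nth 0 l i.
Proof.
move=> /andP[Hs _] Hik.
case: (ltnP k (size l)) => Hk; last by rewrite (nth_default 0 Hk).
have Hi : i < size l by apply: leq_ltn_trans Hk.
have Htr : transitive geq by move=> x y z h1 h2; exact: leq_trans h2 h1.
exact: (sorted_leq_nth Htr (@leqnn) 0 Hs) Hik.
Qed.

Lemma mk_part (N : nat) (f : nat -> nat) :
  (forall i, f i.+1 <= f i) -> (forall i, N <= i -> f i = 0) ->
  exists nu, is_partition nu /\ forall i, nth 0 nu i = f i.
Proof.
elim: N f => [|N IH] f Hd Hz.
  by exists [::]; split => // i; rewrite nth_nil Hz.
case: (posnP (f 0)) => H0.
  exists [::]; split => // i; rewrite nth_nil.
  have: f i <= f 0 by elim: i => // i IHi; exact: leq_trans (Hd i) IHi.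
  by rewrite H0 leqn0 => /eqP.
have [nu [Hnu Hn]] := IH (fun i => f i.+1) (fun i => Hd i.+1) (fun i Hi => Hz i.+1 Hi).
exists (f 0 :: nu); split; last by case.
move: Hnu => /andP[Hs Hp]; apply/andP; split; last by rewrite /= H0.
case: nu Hn Hs Hp => [|y s] Hn Hs Hp //=.
apply/andP; split => //; have := Hn 0; rewrite /= => ->; exact: Hd.
Qed.

Lemma addable_of l a b : is_partition l -> 0 < a -> 0 < b ->
  nth 0 l a.-1 = b.-1 -> (1 < a -> b <= nth 0 l (a - 2)) -> addable l (a, b).
Proof.
move=> Hl Ha Hb Hab Hprev.
pose f i := if i == a.-1 then b else nth 0 l i.
have [nu [Hnu Hn]] : exists nu, is_partition nu /\ forall i, nth 0 nu i = f i.
  apply: (@mk_part (maxn (size l) a) f).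
    move=> i; rewrite /f.
    case: (eqVneq i.+1 a.-1) => E1.
      have -> : (i == a.-1) = false by apply/eqP; lia.
      have -> : i = a - 2 by lia.
      apply: Hprev; lia.
    case: (eqVneq i a.-1) => E2.
      have := part_mono Hl (leqnSn i); rewrite E2 Hab; lia.
    exact: part_mono Hl (leqnSn i).
  move=> i Hi; rewrite /f.
  have -> : (i == a.-1) = false by apply/eqP; lia.
  apply: nth_default; lia.
split.
  rewrite /in_diag /is_node /= Ha Hb Hab /=; lia.
exists nu; split => // [[x1 x2]].
rewrite /in_diag /is_node /= Hn /f.
case: (eqVneq x1.-1 a.-1) => E.
  case: (posnP x1) => Hx1.
    by subst x1; rewrite /=; apply/esym/eqP => -[Ea _]; lia.
  have -> : x1 = a by lia.
  rewrite Hab xpair_eqE eqxx /=.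
  lia.
have -> : ((x1, x2) == (a, b)) = false by apply/eqP => -[E1 E2]; subst; rewrite eqxx in E.
by rewrite orbF.
Qed.

Lemma removable_of l a b : is_partition l -> 0 < a -> 0 < b ->
  nth 0 l a.-1 = b -> nth 0 l a < b -> removable l (a, b).
Proof.
move=> Hl Ha Hb Hab Hnext.
pose f i := if i == a.-1 then b.-1 else nth 0 l i.
have [nu [Hnu Hn]] : exists nu, is_partition nu /\ forall i, nth 0 nu i = f i.
  apply: (@mk_part (size l) f).
    move=> i; rewrite /f.
    case: (eqVneq i.+1 a.-1) => E1.
      have -> : (i == a.-1) = false by apply/eqP; lia.
      have := part_mono Hl (leqnSn i); rewrite E1 Hab; lia.
    case: (eqVneq i a.-1) => E2.
      have -> : i.+1 = a by lia.
      lia.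
    exact: part_mono Hl (leqnSn i).
  move=> i Hi; rewrite /f.
  case: (eqVneq i a.-1) => E.
    subst i; rewrite nth_default in Hab; lia.
  exact: nth_default.
split.
  rewrite /in_diag /is_node /= Ha Hb Hab /=; lia.
exists nu; split => // [[x1 x2]].
rewrite /in_diag /is_node /= Hn /f.
case: (eqVneq x1.-1 a.-1) => E.
  case: (posnP x1) => Hx1.
    by subst x1; rewrite /=.
  have -> : x1 = a by lia.
  rewrite Hab xpair_eqE eqxx /=; lia.
have -> : ((x1, x2) == (a, b)) = false by apply/eqP => -[E1 E2]; subst; rewrite eqxx in E.
by rewrite andbT.
Qed.

Lemma ncol_NE x : ncol (NE x) = (ncol x + 1)%R.
Proof. rewrite /ncol /NE /=; lia. Qed.
Lemma ncol_SE x : 0 < x.1 -> ncol (SE x) = (ncol x + 1)%R.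
Proof. rewrite /ncol /SE /=; lia. Qed.
Lemma ncol_SW x : 0 < x.2 -> ncol (SW x) = (ncol x - 1)%R.
Proof. rewrite /ncol /SW /=; lia. Qed.

Lemma tile_col_aux s x i : all is_node (x :: s) -> path tile_step x s ->
  i < size (x :: s) -> ncol (nth (0,0) (x :: s) i) = (ncol x + i%:Z)%R.
Proof.
elim: s x i => [|y s IH] x i /=.
  by move=> _ _; rewrite ltnS leqn0 => /eqP ->; rewrite addr0.
move=> /andP[Hx Hn] /andP[Hst Hp]; case: i => [|i] Hi; first by rewrite addr0.
rewrite IH // (_ : ncol y = ncol x + 1)%R; first by lia.
move: Hst; rewrite /tile_step => /orP[] /eqP ->; first exact: ncol_NE.
by apply: ncol_SE; case/andP: Hx.
Qed.

Lemma tile_col t i : is_tile t -> i < size t ->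
  ncol (nth (0,0) t i) = (ncol (tstart t) + i%:Z)%R.
Proof. case: t => [|x s] //= /andP[Ha Hp] Hi; exact: tile_col_aux. Qed.

Lemma tile_uniq (T : seq (seq node)) t t' x : uniq (flatten T) ->
  t \in T -> t' \in T -> x \in t -> x \in t' -> t = t'.
Proof.
elim: T => [|t0 T IH] //=; rewrite cat_uniq => /and3P[_ Hd Hu].
have Hx : forall s, s \in T -> x \in s -> x \in t0 -> False.
  move=> s Hs Hxs Hx0; move/negP: Hd; apply; apply/hasP; exists x => //.
  by apply/flattenP; exists s.
rewrite !inE => /orP[/eqP->|Ht] /orP[/eqP->|Ht'] Hxt Hxt' //.
- by case: (Hx _ Ht' Hxt' Hxt).
- by case: (Hx _ Ht Hxt Hxt').
- exact: IH.
Qed.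

Definition succ (T : seq (seq node)) (x y : node) : Prop :=
  exists2 t, t \in T & exists i, [/\ i.+1 < size t, nth (0,0) t i = x & nth (0,0) t i.+1 = y].


Lemma succ_step T x y : all is_dyck_tile T -> succ T x y -> y = NE x \/ y = SE x.
Proof.
move=> HT [t Ht [i [Hi <- <-]]].
have /andP[Htile _] := allP HT t Ht.
case: t Ht Htile Hi => [|x0 s] //= Ht /andP[_ Hp] Hi.
move/(pathP (0,0)): Hp => /(_ i Hi).
by rewrite /tile_step => /orP[] /eqP ->; [left|right].
Qed.

Lemma succ_mem T x y : succ T x y -> exists2 t, t \in T & (x \in t) && (y \in t).
Proof.
move=> [t Ht [i [Hi <- <-]]]; exists t => //.
by rewrite !mem_nth // ltnW.
Qed.

Lemma succ_uniq_r T x y y' : all is_dyck_tile T -> uniq (flatten T) ->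
  succ T x y -> succ T x y' -> y = y'.
Proof.
move=> HT HU [t Ht [i [Hi Hx Hy]]] [t' Ht' [i' [Hi' Hx' Hy']]].
have E : t = t'.
  apply: (tile_uniq (x:=x) HU Ht Ht'); [rewrite -Hx|rewrite -Hx']; exact: mem_nth (ltnW _).
subst t'.
have /andP[Htile _] := allP HT t Ht.
have := tile_col Htile (ltnW Hi); have := tile_col Htile (ltnW Hi').
rewrite Hx Hx' => -> E; have Eii : i = i' by lia.
by rewrite -Hy -Hy' Eii.
Qed.

Lemma succ_uniq_l T x x' y : all is_dyck_tile T -> uniq (flatten T) ->
  succ T x y -> succ T x' y -> x = x'.
Proof.
move=> HT HU [t Ht [i [Hi Hx Hy]]] [t' Ht' [i' [Hi' Hx' Hy']]].
have E : t = t'.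
  apply: (tile_uniq (x:=y) HU Ht Ht'); [rewrite -Hy|rewrite -Hy']; exact: mem_nth.
subst t'.
have /andP[Htile _] := allP HT t Ht.
have := tile_col Htile Hi; have := tile_col Htile Hi'.
rewrite Hy Hy' => -> E; have Eii : i = i' by lia.
by rewrite -Hx -Hx' Eii.
Qed.

Lemma not_start T t x : t \in T -> x \in t -> x != tstart t -> exists y, succ T y x.
Proof.
move=> Ht Hx Hne; set i := index x t.
have Hi : i < size t by rewrite index_mem.
have Hnx : nth (0,0) t i = x by rewrite nth_index.
case: i Hi Hnx => [|i] Hi Hnx.
  by case: t Ht Hx Hne Hi Hnx => //= x0 s _ _; rewrite /tstart /= => /eqP + _ E; rewrite E.
by exists (nth (0,0) t i); exists t => //; exists i.
Qed.

Lemma not_end T t x : t \in T -> x \in t -> x != tend t -> exists y, succ T x y.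
Proof.
move=> Ht Hx Hne; set i := index x t.
have Hi : i < size t by rewrite index_mem.
have Hnx : nth (0,0) t i = x by rewrite nth_index.
case: (ltnP i.+1 (size t)) => Hs.
  by exists (nth (0,0) t i.+1); exists t => //; exists i.
have E : i = (size t).-1 by lia.
by move: Hne; rewrite /tend -Hnx E nth_last eqxx.
Qed.

Lemma col_bounds t x : is_tile t -> x \in t ->
  (ncol (tstart t) <= ncol x)%R /\ (ncol x <= ncol (tend t))%R.
Proof.
move=> Ht Hx.
have Hi : index x t < size t by rewrite index_mem.
have := tile_col Ht Hi; rewrite nth_index // => ->.
have Hs : (size t).-1 < size t by lia.
have := tile_col Ht Hs; rewrite nth_last -/(tend t) => ->.
split; lia.
Qed.

Lemma dyck_max t x : is_dyck_tile t -> x \in t ->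
  height x <= height (tstart t) /\ height x <= height (tend t).
Proof.
move=> /andP[_ /andP[/eqP -> /eqP ->]] Hx.
by split; apply: (leq_bigmax_seq (F := height)).
Qed.

Lemma succ_not_end T u z : all is_dyck_tile T -> succ T u z -> height z < height u ->
  exists y, succ T z y.
Proof.
move=> HT Hs Hh; have [t Ht /andP[Hu Hz]] := succ_mem Hs.
apply: (not_end Ht Hz); apply/eqP => E.
have [_ H] := dyck_max (allP HT t Ht) Hu; rewrite -E in H; lia.
Qed.

Lemma succ_not_start T z v : all is_dyck_tile T -> succ T z v -> height z < height v ->
  exists y, succ T y z.
Proof.
move=> HT Hs Hh; have [t Ht /andP[Hz Hv]] := succ_mem Hs.
apply: (not_start Ht Hz); apply/eqP => E.
have [H _] := dyck_max (allP HT t Ht) Hv; rewrite -E in H; lia.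
Qed.

Lemma skew_node l m x : in_skew l m x -> is_node x.
Proof. by case/andP => /andP[]. Qed.

Lemma SE_not_start l m T x : is_dyck_tiling l m T -> cover_expansive l m T ->
  in_skew l m x -> in_skew l m (SE x) -> exists y, succ T y (SE x).
Proof.
move=> [HT [HU Hf]] [Hc _] Hx Hsx.
have /flattenP [t Ht Hxt] : x \in flatten T by rewrite Hf.
have /flattenP [t' Ht' Hxt'] : SE x \in flatten T by rewrite Hf.
apply: (not_start Ht' Hxt'); apply/eqP => E.
have := Hc x t t' Ht Ht' Hx Hsx Hxt Hxt'; rewrite -E.
have /andP[Htile _] := allP HT t Ht.
have [H1 _] := col_bounds Htile Hxt.
have Hn : 0 < x.1 by case/andP: (skew_node Hx).
rewrite ncol_SE //; lia.
Qed.

Lemma SW_not_end l m T x : is_dyck_tiling l m T -> cover_expansive l m T ->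
  in_skew l m x -> in_skew l m (SW x) -> exists y, succ T (SW x) y.
Proof.
move=> [HT [HU Hf]] [_ Hc] Hx Hsx.
have /flattenP [t Ht Hxt] : x \in flatten T by rewrite Hf.
have /flattenP [t' Ht' Hxt'] : SW x \in flatten T by rewrite Hf.
apply: (not_end Ht' Hxt'); apply/eqP => E.
have := Hc x t t' Ht Ht' Hx Hsx Hxt Hxt'; rewrite -E.
have /andP[Htile _] := allP HT t Ht.
have [_ H1] := col_bounds Htile Hxt.
have Hn : 0 < x.2 by case/andP: (skew_node Hx).
rewrite ncol_SW //; lia.
Qed.

Lemma succ_skew l m T x y : is_dyck_tiling l m T -> succ T x y -> in_skew l m x /\ in_skew l m y.
Proof.
move=> [_ [_ Hf]] Hs; have [t Ht /andP[Hx Hy]] := succ_mem Hs.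
by rewrite -!Hf; split; apply/flattenP; exists t.
Qed.

Lemma chain (R : node -> node -> Prop) (Z U V : nat -> node) d :
  (forall i, i <= d -> exists y, R y (Z i)) ->
  (forall i y, i <= d -> R y (Z i) -> y = U i \/ y = U i.+1) ->
  ~ R (U 0) (Z 0) ->
  (forall x y y', R x y -> R x y' -> y = y') ->
  (forall x x' y, R x y -> R x' y -> x = x') ->
  (forall i, i <= d -> R (U i.+1) (Z i) -> exists y, R (Z i) y) ->
  (forall i y, i <= d -> R (Z i) y -> y = V i \/ y = V i.+1) ->
  ~ R (Z d) (V d.+1) -> ~ R (Z 0) (V 0) ->
  (forall i k, Z i = Z k -> i = k) -> False.
Proof.
move=> Hpre Hpc HU0 Hur Hul Hne Hsc HVd HV0 Hinj.
have S1 : forall i, i <= d -> R (U i.+1) (Z i).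
  elim=> [|i IH] Hi.
    have [y Hy] := Hpre 0 Hi.
    by case: (Hpc 0 y Hi Hy) => E; subst y.
  have [y Hy] := Hpre i.+1 Hi.
  case: (Hpc i.+1 y Hi Hy) => E; subst y => //.
  have := Hinj _ _ (Hur _ _ _ (IH (ltnW Hi)) Hy); lia.
have S2 : forall k, k <= d -> R (Z (d - k)) (V (d - k)).
  elim=> [|k IH] Hk.
    rewrite subn0; have [y Hy] := Hne d (leqnn d) (S1 d (leqnn d)).
    by case: (Hsc d y (leqnn d) Hy) => E; subst y.
  have Hi : d - k.+1 <= d by lia.
  have [y Hy] := Hne _ Hi (S1 _ Hi).
  case: (Hsc _ y Hi Hy) => E; subst y => //.
  have E2 : (d - k.+1).+1 = d - k by lia.
  rewrite E2 in Hy.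
  have := Hinj _ _ (Hul _ _ _ (IH (ltnW Hk)) Hy); lia.
by apply: HV0; have := S2 d (leqnn d); rewrite subnn.
Qed.

Lemma trans_exists (P : nat -> bool) N : P 0 -> ~~ P N -> exists k, P k && ~~ P k.+1.
Proof.
elim: N => [|N IH] H0 HN; first by rewrite H0 in HN.
case: (boolP (P N)) => HPN; first by exists N; rewrite HPN.
exact: IH.
Qed.

Theorem lemma4p5 (l m : seq nat) (j : int) :
  is_partition l -> is_partition m ->
  (forall n, in_diag m n -> in_diag l n) ->
  (exists n, addable m n /\ ncol n = j) ->
  (exists T, is_dyck_tiling l m T /\ cover_expansive l m T) ->
  exists n, (addable l n \/ removable l n) /\ ncol n = j.
Proof.
move=> Hl Hm Hsub [[a b] [[Hnm [nu [Hnu Hdnu]]] Hj]] [T [HT Hc]].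
have Hnub : (0 < a) && (0 < b) && (b <= nth 0 nu a.-1).
  by have := Hdnu (a,b); rewrite eqxx orbT.
case/andP: Hnub => /andP[Ha Hb] Hnub.
have Hma : nth 0 m a.-1 < b.
  by move: Hnm; rewrite /in_diag /is_node /= Ha Hb /= -ltnNge.
have HmSW : 1 < b -> in_diag m (a, b.-1).
  move=> Hb1; have := Hdnu (a, b.-1).
  have -> : ((a, b.-1) == (a, b)) = false by apply/eqP => -[]; lia.
  rewrite orbF => <-; rewrite /in_diag /is_node /=; lia.
have HmSE : 1 < a -> in_diag m (a.-1, b).
  move=> Ha1; have := Hdnu (a.-1, b).
  have -> : ((a.-1, b) == (a, b)) = false by apply/eqP => -[]; lia.
  rewrite orbF => <-; rewrite /in_diag /is_node /=.
  have := part_mono Hnu (leq_pred a.-1); lia.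
have notm : forall x1 x2, a <= x1 -> b <= x2 -> ~~ in_diag m (x1, x2).
  move=> x1 x2 H1 H2; rewrite /in_diag /= negb_and -ltnNge; apply/orP; right.
  have := part_mono Hm (_ : a.-1 <= x1.-1); lia.
have skewI : forall x1 x2, 0 < x1 -> 0 < x2 -> x2 <= nth 0 l x1.-1 -> a <= x1 -> b <= x2 ->
    in_skew l m (x1, x2).
  move=> x1 x2 H1 H2 H3 H4 H5; rewrite /in_skew notm // andbT /in_diag /is_node /=; lia.
have ncolE : forall k, ncol (a + k, b + k) = j.
  by move=> k; rewrite -Hj /ncol /=; lia.
case: (boolP (in_diag l (a, b))) => Hp; last first.
  exists (a, b); split => //; left; apply: addable_of => //.
    move: Hp; rewrite /in_diag /is_node /= Ha Hb /= -ltnNge => Hp.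
    case: (ltnP 1 b) => Hb1.
      have := Hsub _ (HmSW Hb1); rewrite /in_diag /=; lia.
    lia.
  move=> Ha1; have := Hsub _ (HmSE Ha1); rewrite /in_diag /=.
  have -> : a.-1.-1 = a - 2 by lia.
  by case/andP.
set Z := fun k => (a + k, b + k).
set U := fun k => (a + k, (b + k).-1).
set V := fun k => ((a + k).-1, b + k).
have [d /andP[HZd HZd1]] : exists d, in_diag l (Z d) && ~~ in_diag l (Z d.+1).
  apply: (trans_exists (N := size l)); first by rewrite /Z !addn0.
  rewrite /in_diag /Z /= nth_default; last lia.
  by rewrite negb_and leqn0 addn_eq0 eqn0Ngt Hb orbT.
move: HZd HZd1; rewrite /in_diag /Z /is_node /= => HZd HZd1.
have HZd' : b + d <= nth 0 l (a + d).-1 by move: HZd; case/andP.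
have HZd1' : nth 0 l (a + d) < b + d.+1.
  move: HZd1; rewrite !addnS /=; lia.

clear HZd HZd1.
have [HTt [HU Hf]] := HT.
have candZ : forall i y, succ T y (Z i) -> y = U i \/ y = U i.+1.
  move=> i [y1 y2] Hs; case: (succ_step HTt Hs); rewrite /Z /U /NE /SE /= => -[E1 E2].
    left; congr pair; lia.
  right; congr pair; lia.
have candV : forall i y, succ T (Z i) y -> y = V i \/ y = V i.+1.
  move=> i [y1 y2] Hs; case: (succ_step HTt Hs); rewrite /Z /V /NE /SE /= => -[E1 E2].
    right; congr pair; lia.
  left; congr pair; lia.
have Zinj : forall i k, Z i = Z k -> i = k by move=> i k [E]; lia.
have HU0 : ~ succ T (U 0) (Z 0).
  move=> /(succ_skew HT) [/andP[H1 H2] _]; move: H1 H2; rewrite /U addn0 addn0.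
  case: (ltnP 1 b) => Hb1; first by rewrite HmSW.
  rewrite /in_diag /is_node /=; lia.
have HV0 : ~ succ T (Z 0) (V 0).
  move=> /(succ_skew HT) [_ /andP[H1 H2]]; move: H1 H2; rewrite /V addn0 addn0.
  case: (ltnP 1 a) => Ha1; first by rewrite HmSE.
  rewrite /in_diag /is_node /=; lia.
have HZsk : forall i, i <= d -> in_skew l m (Z i).
  move=> i Hi; apply: skewI; rewrite ?leq_addr ?addn_gt0 ?Ha ?Hb //.
  have := part_mono Hl (_ : (a + i).-1 <= (a + d).-1); lia.
case: (boolP (b + d <= nth 0 l (a + d))) => HX;
  case: (boolP (b + d.+1 <= nth 0 l (a + d).-1)) => HY.
- exists (Z d.+1); split; last exact: ncolE.
  left; rewrite /Z addnS [b + _]addnS; apply: addable_of => //=; first lia.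
  move=> _; have -> : (a + d).+1 - 2 = (a + d).-1 by lia.
  by rewrite -addnS.
- exfalso; apply: (@chain (succ T) Z U V d) => //.
  + move=> i Hi; have := @SE_not_start l m T (U i.+1) HT Hc.
    have -> : SE (U i.+1) = Z i by rewrite /SE /U /Z /= !addnS.
    apply; last exact: HZsk.
    apply: skewI; rewrite /= ?addnS /= ?leq_addr ?addn_gt0 ?Ha //; try lia.
    have := part_mono Hl (_ : a + i <= a + d); lia.
  + by move=> i y _; apply: candZ.
  + by move=> *; apply: (succ_uniq_r HTt HU); eauto.
  + by move=> *; apply: (succ_uniq_l HTt HU); eauto.
  + move=> i _ Hs; apply: (succ_not_end HTt Hs); rewrite /height /U /Z /=; lia.
  + by move=> i y _; apply: candV.
  + move=> /(succ_skew HT) [_ /andP[H1 _]]; move: H1.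
    rewrite /in_diag /V /= addnS /=; lia.
- exfalso; apply: (@chain (fun x y => succ T y x) Z V U d) => //.
  + move=> i Hi; have := @SW_not_end l m T (V i.+1) HT Hc.
    have -> : SW (V i.+1) = Z i by rewrite /SW /V /Z /= !addnS.
    apply; last exact: HZsk.
    apply: skewI; rewrite /= ?addnS /= ?leq_addr ?addn_gt0 ?Ha ?Hb //; try lia.
    have := part_mono Hl (_ : (a + i).-1 <= (a + d).-1); lia.
  + by move=> i y _; apply: candV.
  + by move=> *; apply: (succ_uniq_l HTt HU); eauto.
  + by move=> *; apply: (succ_uniq_r HTt HU); eauto.
  + move=> i _ Hs; apply: (succ_not_start HTt Hs); rewrite /height /V /Z /=; lia.
  + by move=> i y _; apply: candZ.
  + move=> /(succ_skew HT) [/andP[H1 _] _]; move: H1.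
    rewrite /in_diag /U /= addnS /=; lia.
- exists (Z d); split; last exact: ncolE.
  right; apply: removable_of => //; rewrite ?addn_gt0 ?Ha ?Hb //; lia.
Qed.
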